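(* Let $(R,+,0,\times,1,\leq)$ be a partially ordered unitary (nonassociative) ring. For $x \in R$ define $x^{\to 0} = 1$ and $x^{\to n+1} = x\, x^{\to n}$. Suppose that: (1) $1 \geq 0$; (2) $R$ is monotone $\sigma$-complete; (3) every $x \in\, ]0,1]$ has a right-sup-almost-inverse; (4) for every $x \in [0,1[$, $\inf_{n \in \mathbb{N}} x^{\to n}$ exists and equals $0$. Then: (a) for every $x \in [0,1[$, the supremum $\sum_{n\in\mathbb{N}} x^{\to n} := \sup_{n \in \mathbb{N}} \sum_{k=0}^n x^{\to k}$ exists; (b) for every $x \in [0,1[$, $x \sum_{n\in\mathbb{N}} x^{\to n} = \sup_{n\in\mathbb{N}} \sum_{k=0}^{n} x^{\to k+1}$ (and this supremum exists); (c) every $x \in\, ]0,1]$ admits a right inverse, namely $x_R^{-1} = \sum_{n \in \mathbb{N}} (1-x)^{\to n}$, i.e. $x\, x_R^{-1} = 1$; moreover $x_R^{-1} = 1 + a \geq 1$ where $a := \sup_{n}\sum_{k=0}^{n}(1-x)^{\to k+1} \geq 0$.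
   Context: Rings are not assumed associative or commutative: a ring is an abelian group $(R,+,0)$ with a biadditive multiplication; unitary means there is a two-sided multiplicative unit $1$. A partially ordered ring is a ring with a partial order $\leq$ such that $y \geq z \Rightarrow x+y \geq x+z$ and $x \geq 0, y \geq 0 \Rightarrow xy \geq 0$. Write $x < y$ for $x \le y$, $x \ne y$; $]0,1] = \{x : 0 < x \leq 1\}$, $[0,1[ = \{x : 0 \le x < 1\}$. A poset is monotone $\sigma$-complete if every increasing sequence that is bounded above has a supremum. An element $x > 0$ has a right-sup-almost-inverse if there is $y > 0$ with $xy \geq 1$. *)

(* Defs.v *)
From mathcomp Require Import all_boot all_order all_algebra.
Set Implicit Arguments. Unset Strict Implicit. Unset Printing Implicit Defensive.
Import GRing.Theory.
Local Open Scope ring_scope.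

Section Defs.
Variables (R : zmodType) (mul : R -> R -> R) (one : R) (le : R -> R -> Prop).

Definition unitary_biadditive : Prop :=
  (forall x y z, mul (x + y) z = mul x z + mul y z) /\
  (forall x y z, mul x (y + z) = mul x y + mul x z) /\
  (forall x, mul one x = x) /\ (forall x, mul x one = x).

Definition partial_order : Prop :=
  (forall x, le x x) /\
  (forall x y, le x y -> le y x -> x = y) /\
  (forall x y z, le x y -> le y z -> le x z).

Definition po_unitary_ring : Prop :=
  unitary_biadditive /\ partial_order /\
  (forall x y z, le z y -> le (x + z) (x + y)) /\
  (forall x y, le 0 x -> le 0 y -> le 0 (mul x y)).

Definition lt (x y : R) : Prop := le x y /\ x <> y.

Fixpoint rpow (x : R) (n : nat) : R :=
  match n with O => one | S m => mul x (rpow x m) end.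

Definition is_sup_seq (u : nat -> R) (s : R) : Prop :=
  (forall n, le (u n) s) /\ (forall b, (forall n, le (u n) b) -> le s b).

Definition is_inf_seq (u : nat -> R) (s : R) : Prop :=
  (forall n, le s (u n)) /\ (forall b, (forall n, le b (u n)) -> le b s).

Definition monotone_sigma_complete : Prop :=
  forall u : nat -> R, (forall n, le (u n) (u n.+1)) ->
    (exists b, forall n, le (u n) b) -> exists s, is_sup_seq u s.

Definition has_right_sup_almost_inverse (x : R) : Prop :=
  exists y, lt 0 y /\ le one (mul x y).

Definition psum (x : R) (n : nat) : R := \sum_(k < n.+1) rpow x k.
Definition psum1 (x : R) (n : nat) : R := \sum_(k < n.+1) rpow x k.+1.

End Defs.

(* Main.v *)
Require Import Defs.
From mathcomp Require Import all_boot all_order all_algebra.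
Import GRing.Theory.
Local Open Scope ring_scope.

Theorem mainTheorem11 (R : zmodType) (mul : R -> R -> R) (one : R)
    (le : R -> R -> Prop) :
  po_unitary_ring mul one le ->
  le 0 one ->
  monotone_sigma_complete le ->
  (forall x, lt le 0 x -> le x one ->
     has_right_sup_almost_inverse mul one le x) ->
  (forall x, le 0 x -> lt le x one -> is_inf_seq le (rpow mul one x) 0) ->
  (* (a) *)
  (forall x, le 0 x -> lt le x one ->
     exists s, is_sup_seq le (psum mul one x) s) /\
  (* (b) *)
  (forall x, le 0 x -> lt le x one -> forall s,
     is_sup_seq le (psum mul one x) s ->
     is_sup_seq le (psum1 mul one x) (mul x s)) /\
  (* (c) *)
  (forall x, lt le 0 x -> le x one -> forall s,
     is_sup_seq le (psum mul one (one - x)) s ->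
     mul x s = one /\
     exists a, is_sup_seq le (psum1 mul one (one - x)) a /\
       le 0 a /\ s = one + a /\ le one s).
Proof.
move=> [[mDl [mDr [m1l m1r]]] [[lrefl [lanti ltrans]] [ladd lmul]]] h01 hsig hinv hinf.
have mul0l : forall y, mul 0 y = 0.
  move=> y; have h := mDl 0 0 y; rewrite addr0 in h.
  by apply: (addrI (mul 0 y)); rewrite -h addr0.
have mul0r : forall y, mul y 0 = 0.
  move=> y; have h := mDr y 0 0; rewrite addr0 in h.
  by apply: (addrI (mul y 0)); rewrite -h addr0.
have mulNl : forall a y, mul (- a) y = - mul a y.
  move=> a y; have h := mDl a (- a) y; rewrite subrr mul0l in h.
  by apply: (addrI (mul a y)); rewrite -h subrr.
have mulNr : forall a y, mul y (- a) = - mul y a.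
  move=> a y; have h := mDr y a (- a); rewrite subrr mul0r in h.
  by apply: (addrI (mul y a)); rewrite -h subrr.
have mulBl : forall a b y, mul (a - b) y = mul a y - mul b y.
  by move=> a b y; rewrite mDl mulNl.
have mulBr : forall a b y, mul y (a - b) = mul y a - mul y b.
  by move=> a b y; rewrite mDr mulNr.
have mulsum : forall x n (F : 'I_n -> R),
    mul x (\sum_(k < n) F k) = \sum_(k < n) mul x (F k).
  by move=> x n F; apply: (big_morph (mul x) (mDr x) (mul0r x)).
have leB : forall a b, le a b <-> le 0 (b - a).
  move=> a b; split=> h.
    by have := ladd (- a) b a h; rewrite addNr addrC.
  by have := ladd a (b - a) 0 h; rewrite addr0 addrC subrK.
have leE : forall a b c d, b - a = d - c -> le a b -> le c d.
  by move=> a b c d e h; apply/(leB c d); rewrite -e; apply/(leB a b).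
have leD : forall a b c d, le a b -> le c d -> le (a + c) (b + d).
  move=> a b c d h1 h2; apply: (ltrans _ _ _ (ladd a d c h2)).
  by have := ladd d b a h1; rewrite (addrC d a) (addrC d b).
have mono : forall x a b, le 0 x -> le a b -> le (mul x a) (mul x b).
  by move=> x a b hx /(leB _ _) hab; apply/(leB _ _); rewrite -mulBr; apply: lmul.
have rpow0 : forall x n, le 0 x -> le 0 (rpow mul one x n).
  by move=> x n hx; elim: n => [|n IH] //=; apply: lmul.
have psum_rec : forall x n, psum mul one x n.+1 = psum mul one x n + rpow mul one x n.+1.
  by move=> x n; rewrite /psum big_ord_recr.
have psum_l : forall x n, psum mul one x n.+1 = one + psum1 mul one x n.
  by move=> x n; rewrite /psum /psum1 big_ord_recl.
have psum0 : forall x, psum mul one x 0 = one.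
  by move=> x; rewrite /psum big_ord_recl big_ord0 addr0.
have mul_psum : forall x n, mul x (psum mul one x n) = psum1 mul one x n.
  by move=> x n; rewrite /psum mulsum.
have psum_inc : forall x n, le 0 x -> le (psum mul one x n) (psum mul one x n.+1).
  move=> x n hx; apply/(leB _ _); rewrite psum_rec addrAC subrr add0r; exact: rpow0.
have flip : forall c a b, le (c - a) b -> le (c - b) a.
  move=> c a b; apply: leE.
  by rewrite !opprB !addrA (addrC a).
have core : forall x, le 0 x -> lt le x one -> forall s,
    is_sup_seq le (psum mul one x) s ->
    mul (one - x) s = one /\ mul x s = s - one /\
    is_sup_seq le (psum1 mul one x) (s - one).
  move=> x hx hx1 s [hs1 hs2].
  have hxo : le x one by case: hx1.
  have h1x : le 0 (one - x) by move/(leB _ _): hxo.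
  have step1 : forall n, le (one - rpow mul one x n.+1) (mul (one - x) s).
    move=> n; have := mono _ _ _ h1x (hs1 n).
    suff -> : mul (one - x) (psum mul one x n) = one - rpow mul one x n.+1 by [].
    have e0 : one + psum1 mul one x n = psum mul one x n + rpow mul one x n.+1.
      by rewrite -psum_l psum_rec.
    rewrite mulBl m1l mul_psum; apply/eqP; rewrite subr_eq addrAC e0 addrK //.
  have step2 : forall n, le (one - mul (one - x) s) (rpow mul one x n).
    case=> [|n]; last by apply: flip; apply: step1.
    apply: (ltrans _ x _ _ hxo); apply: flip; have := step1 0%N; by rewrite /= m1r.
  have step3 : le one (mul (one - x) s).
    have := (hinf x hx hx1).2 _ step2; apply: leE.
    by rewrite sub0r opprB.
  have s0 : le 0 s by apply: (ltrans _ _ _ h01); rewrite -(psum0 x); apply: hs1.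
  have step4 : le s (mul x s + one).
    apply: hs2; case=> [|n].
      rewrite psum0; have := ladd one (mul x s) 0 (lmul _ _ hx s0).
      by rewrite addr0 addrC.
    rewrite psum_l addrC -mul_psum; apply: leD (lrefl _).
    exact: mono.
  have ez : mul (one - x) s = one.
    apply: lanti step3; move: step4; apply: leE.
    by rewrite mulBl m1l opprB addrCA addrA.
  have exs : mul x s = s - one.
    by rewrite -ez mulBl m1l opprB addrC subrK.
  split=> //; split=> //; split.
    move=> n; have := hs1 n.+1; apply: leE.
    by rewrite psum_l opprD addrA.
  move=> b hb; have : le s (b + one).
    apply: hs2; case=> [|n].
      apply: (ltrans _ _ _ (psum_inc x 0%N hx)).
      have := ladd one _ _ (hb 0%N); rewrite -psum_l => h; apply: (ltrans _ _ _ h).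
      by rewrite addrC; apply: lrefl.
    rewrite psum_l addrC; apply: leD (hb n) (lrefl _).
  by apply: leE; rewrite opprB addrA.
split.
  move=> x hx hx1.
  have hxo : le x one by case: hx1.
  have hu0 : le 0 (one - x) by move/(leB _ _): hxo.
  have hu : lt le 0 (one - x).
    split=> // e; case: hx1 => _; apply; apply/eqP; rewrite eq_sym -subr_eq0 -e eqxx //.
  have hu1 : le (one - x) one.
    by apply/(leB _ _); rewrite opprB addrC subrK.
  have [y [[y0 _] hy]] := hinv _ hu hu1.
  have base : le (one + mul x y) y.
    move: hy; apply: leE; rewrite mulBl m1l opprD addrA.
    by rewrite addrAC.
  have iter0 : forall n, le 0 (iter n (mul x) y).
    by elim=> [|n IH] //=; apply: lmul.
  have key : forall n, le (psum mul one x n + iter n.+1 (mul x) y) y.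
    elim=> [|n IH]; first by rewrite psum0.
    apply: (ltrans _ _ _ _ base); rewrite psum_l -addrA; apply: leD (lrefl _) _.
    have := mono _ _ _ hx IH; rewrite mDr mul_psum //.
  apply: hsig; first by move=> n; apply: psum_inc.
  exists y => n; apply: (ltrans _ _ _ _ (key n)).
  by have := ladd (psum mul one x n) _ _ (iter0 n.+1); rewrite addr0.
split.
  move=> x hx hx1 s hs; have [_ [-> ?]] := core x hx hx1 s hs; by [].
move=> x [hx0 hxne] hxo s hs.
have hu0 : le 0 (one - x) by move/(leB _ _): hxo.
have hu1 : lt le (one - x) one.
  split; first by apply/(leB _ _); rewrite opprB addrC subrK.
  by move=> e; apply: hxne; rewrite -(subKr one x) e subrr.
have [ez [_ hsup]] := core _ hu0 hu1 s hs.
rewrite opprB addrC subrK in ez.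
have one_s : le one s.
  rewrite -(psum0 (one - x)); apply: (ltrans _ _ _ (psum_inc _ 0%N hu0)).
  by case: hs => h _; apply: h.
split=> //; exists (s - one); split=> //; split.
  by move/(leB _ _): one_s.
by split=> //; rewrite addrC subrK.
Qed.
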